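(* Let $G$ be a right $\ell$-group with a strong order unit $s$, and let $g \in G^-$. Then $g$ has a unique right-normal factorization. It is given by $g = g_k g_{k-1}\cdots g_1$, where $k = \min\{ i \geq 0 : g \geq s^{-i}\}$ and \[ g_i = (g \vee s^{-i})(g \vee s^{-(i-1)})^{-1} \qquad (1 \leq i \leq k). \]
   Context: A right $\ell$-group is a group $G$ (identity $e$) with a partial order $\leq$ that is right-invariant ($x \leq y \Rightarrow xz \leq yz$ for all $x,y,z$) and under which $G$ is a lattice with meet $\wedge$ and join $\vee$. $G^- := \{g \in G : g \leq e\}$ is the negative cone, and $[a,b] := \{x : a \leq x \leq b\}$. An element $s \in G$ is normal if $x \mapsto sx$ is a lattice automorphism of $G$. It is a strong order unit if $s > e$, $s$ is normal, and for every $g \in G$ there is $k \in \mathbb{Z}$ with $g \leq s^k$. For $g \in G^-$, a right-normal factorization of $g$ is a finite sequence $g_1,\dots,g_k \in [s^{-1},e]$ ($k \geq 0$) satisfying three conditions: (1) $g = g_k g_{k-1}\cdots g_1$; (2) $g_i \neq e$ for all $i$; (3) for each $1 \leq i < k$ there do not exist $h,h' \in G^-$ with $h \neq e$, $h'h = g_{i+1}$ and $hg_i \in [s^{-1},e]$. *)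

(* Defs.v *)
From Stdlib Require Import ZArith List Arith.
Import ListNotations.

Record RLGroup := {
  car :> Type;
  mul : car -> car -> car;
  inv : car -> car;
  e : car;
  le : car -> car -> Prop;
  meet : car -> car -> car;
  join : car -> car -> car;
  mulA : forall x y z, mul x (mul y z) = mul (mul x y) z;
  mul1g : forall x, mul e x = x;
  mulg1 : forall x, mul x e = x;
  mulVg : forall x, mul (inv x) x = e;
  mulgV : forall x, mul x (inv x) = e;
  le_refl : forall x, le x x;
  le_antisym : forall x y, le x y -> le y x -> x = y;
  le_trans : forall x y z, le x y -> le y z -> le x z;
  le_rinv : forall x y z, le x y -> le (mul x z) (mul y z);
  meet_lb1 : forall x y, le (meet x y) x;
  meet_lb2 : forall x y, le (meet x y) y;
  meet_glb : forall x y z, le z x -> le z y -> le z (meet x y);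
  join_ub1 : forall x y, le x (join x y);
  join_ub2 : forall x y, le y (join x y);
  join_lub : forall x y z, le x z -> le y z -> le (join x y) z
}.

Arguments mul {_}. Arguments inv {_}. Arguments e {_}. Arguments le {_}.
Arguments meet {_}. Arguments join {_}.

Section Defs.
Variable G : RLGroup.

Fixpoint npow (x : G) (n : nat) : G :=
  match n with O => e | S m => mul (npow x m) x end.

Definition zpow (x : G) (k : Z) : G :=
  match k with
  | Z0 => e
  | Zpos p => npow x (Pos.to_nat p)
  | Zneg p => inv (npow x (Pos.to_nat p))
  end.

Definition npowN (x : G) (i : nat) : G := inv (npow x i).

Definition lt (x y : G) : Prop := le x y /\ x <> y.

Definition lattice_automorphism (f : G -> G) : Prop :=
  (forall y, exists! x, f x = y) /\
  (forall x y, f (meet x y) = meet (f x) (f y)) /\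
  (forall x y, f (join x y) = join (f x) (f y)).

Definition normal (s : G) : Prop := lattice_automorphism (fun x => mul s x).

Definition strong_order_unit (s : G) : Prop :=
  lt e s /\ normal s /\ forall g : G, exists k : Z, le g (zpow s k).

Definition negcone (g : G) : Prop := le g e.

Definition in_interval (a b x : G) : Prop := le a x /\ le x b.

(* product g_k ... g_1 of the list [g_1; ...; g_k] *)
Definition prodR (l : list G) : G := fold_left (fun acc x => mul x acc) l e.

Definition right_normal_factorization (s g : G) (l : list G) : Prop :=
  (forall x, In x l -> in_interval (inv s) e x) /\
  g = prodR l /\
  (forall x, In x l -> x <> e) /\
  (forall i, S i < length l ->
     ~ exists h h' : G, negcone h /\ negcone h' /\ h <> e /\
         mul h' h = nth (S i) l e /\
         in_interval (inv s) e (mul h (nth i l e))).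

End Defs.

Arguments npow {_}. Arguments zpow {_}. Arguments npowN {_}.
Arguments strong_order_unit {_}. Arguments negcone {_}.
Arguments right_normal_factorization {_}.

(* Main.v *)
Require Import Defs.
From Stdlib Require Import ZArith List Arith Lia Classical.
Import ListNotations.

Lemma inv_uniq {G : RLGroup} (x y : G) : mul x y = e -> y = inv x.
Proof. intro H. rewrite <- (mul1g G y), <- (mulVg G x), <- mulA, H, mulg1. reflexivity. Qed.

Lemma inv_mul {G : RLGroup} (a b : G) : inv (mul a b) = mul (inv b) (inv a).
Proof.
  symmetry. apply inv_uniq.
  rewrite <- mulA, (mulA _ b), mulgV, mul1g, mulgV. reflexivity.
Qed.

Lemma inv_e {G : RLGroup} : inv (@e G) = e.
Proof. symmetry. apply inv_uniq. apply mulg1. Qed.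

Lemma le_mulr_rev {G : RLGroup} (x y z : G) : le (mul x z) (mul y z) -> le x y.
Proof.
  intro H. apply (le_rinv G _ _ (inv z)) in H.
  rewrite <- !mulA, !mulgV, !mulg1 in H. exact H.
Qed.

Lemma join_mulr {G : RLGroup} (a b c : G) : mul (join a b) c = join (mul a c) (mul b c).
Proof.
  apply le_antisym.
  - apply (le_mulr_rev _ _ (inv c)). rewrite <- mulA, mulgV, mulg1.
    apply join_lub.
    + apply (le_mulr_rev _ _ c). rewrite <- mulA, mulVg, mulg1. apply join_ub1.
    + apply (le_mulr_rev _ _ c). rewrite <- mulA, mulVg, mulg1. apply join_ub2.
  - apply join_lub; apply le_rinv; [apply join_ub1 | apply join_ub2].
Qed.

Lemma join_le_eq {G : RLGroup} (x y : G) : le y x -> join x y = x.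
Proof. intro H. apply le_antisym. apply join_lub. apply le_refl. exact H. apply join_ub1. Qed.

Lemma join_le_eq' {G : RLGroup} (x y : G) : le x y -> join x y = y.
Proof. intro H. apply le_antisym. apply join_lub. exact H. apply le_refl. apply join_ub2. Qed.

Lemma le_join_l {G : RLGroup} (x y z : G) : le z x -> le z (join x y).
Proof. intro H. eapply le_trans. exact H. apply join_ub1. Qed.
Lemma le_join_r {G : RLGroup} (x y z : G) : le z y -> le z (join x y).
Proof. intro H. eapply le_trans. exact H. apply join_ub2. Qed.

Definition ljoin {G : RLGroup} (a : G) := forall x y, mul a (join x y) = join (mul a x) (mul a y).

Lemma ljoin_mono {G : RLGroup} (a x y : G) : ljoin a -> le x y -> le (mul a x) (mul a y).
Proof. intros H Hxy. rewrite <- (join_le_eq' _ _ Hxy), H. apply join_ub1. Qed.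

Lemma ljoin_inv {G : RLGroup} (a : G) : ljoin a -> ljoin (inv a).
Proof.
  intros H x y. set (z := join (mul (inv a) x) (mul (inv a) y)).
  assert (Hz : mul a z = join x y).
  { unfold z. rewrite H, !mulA, !mulgV, !mul1g. reflexivity. }
  rewrite <- Hz, mulA, mulVg, mul1g. reflexivity.
Qed.

Lemma ljoin_mul {G : RLGroup} (a b : G) : ljoin a -> ljoin b -> ljoin (mul a b).
Proof. intros Ha Hb x y. rewrite <- !mulA, Hb, Ha. reflexivity. Qed.

Lemma ljoin_e {G : RLGroup} : ljoin (@e G).
Proof. intros x y. rewrite !mul1g. reflexivity. Qed.

Lemma npow_comm {G : RLGroup} (s : G) n : mul s (npow s n) = mul (npow s n) s.
Proof.
  induction n; simpl. rewrite mul1g, mulg1. reflexivity.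
  rewrite mulA, IHn. reflexivity.
Qed.

Lemma N0 {G : RLGroup} (s : G) : npowN s 0 = e.
Proof. apply inv_e. Qed.

Lemma N1 {G : RLGroup} (s : G) : npowN s 1 = inv s.
Proof. unfold npowN. simpl. rewrite mul1g. reflexivity. Qed.

Lemma NS {G : RLGroup} (s : G) n : npowN s (S n) = mul (inv s) (npowN s n).
Proof. unfold npowN. simpl. apply inv_mul. Qed.

Lemma NS' {G : RLGroup} (s : G) n : npowN s (S n) = mul (npowN s n) (inv s).
Proof. unfold npowN. simpl. rewrite <- npow_comm. apply inv_mul. Qed.

Lemma sou_ljoin {G : RLGroup} (s : G) : strong_order_unit s -> ljoin s.
Proof. intros [_ [[_ [_ H]] _]]. exact H. Qed.

Lemma sou_ljoinN {G : RLGroup} (s : G) n : strong_order_unit s -> ljoin (npowN s n).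
Proof.
  intro Hs. induction n. rewrite N0. apply ljoin_e.
  rewrite NS. apply ljoin_mul; auto. apply ljoin_inv, sou_ljoin, Hs.
Qed.

Lemma sinv_le {G : RLGroup} (s : G) : strong_order_unit s -> le (inv s) e.
Proof.
  intros [[H _] _]. apply (le_rinv G _ _ (inv s)) in H. rewrite mul1g, mulgV in H. exact H.
Qed.

Lemma N_le_e {G : RLGroup} (s : G) n : strong_order_unit s -> le (npowN s n) e.
Proof.
  intro Hs. induction n. rewrite N0. apply le_refl.
  rewrite NS. eapply le_trans. apply le_rinv, (sinv_le _ Hs). rewrite mul1g. exact IHn.
Qed.

Lemma N_mul_le {G : RLGroup} (s : G) n x : strong_order_unit s -> le (mul (npowN s n) x) x.
Proof. intro Hs. rewrite <- (mul1g G x) at 2. apply le_rinv, N_le_e, Hs. Qed.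

Lemma N_anti {G : RLGroup} (s : G) i j : strong_order_unit s -> i <= j -> le (npowN s j) (npowN s i).
Proof.
  intros Hs Hij. induction Hij. apply le_refl.
  rewrite NS. eapply le_trans. 2: exact IHHij.
  rewrite <- (mul1g G (npowN s m)) at 2. apply le_rinv, sinv_le, Hs.
Qed.

Lemma N_add {G : RLGroup} (s : G) i : mul (npowN s i) (inv s) = npowN s (S i).
Proof. rewrite NS'. reflexivity. Qed.

Lemma exists_N {G : RLGroup} (s g : G) : strong_order_unit s -> exists n, le (npowN s n) g.
Proof.
  intro Hs. pose proof Hs as [H1 [H2 H3]].
  destruct (H3 (inv g)) as [z Hz].
  assert (Hz' := le_rinv G _ _ g Hz). rewrite mulVg in Hz'.
  destruct z as [|p|p]; simpl in Hz'.
  - exists 0. rewrite N0. rewrite mul1g in Hz'. exact Hz'.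
  - exists (Pos.to_nat p).
    apply (ljoin_mono (npowN s (Pos.to_nat p))) in Hz'. 2: apply sou_ljoinN, Hs.
    unfold npowN at 2 in Hz'. rewrite mulA, mulVg, mul1g, mulg1 in Hz'. exact Hz'.
  - exists 0. rewrite N0. eapply le_trans. exact Hz'. apply (N_mul_le s (Pos.to_nat p) g Hs).
Qed.

Lemma min_exists (P : nat -> Prop) : (exists n, P n) -> exists k, P k /\ forall i, P i -> k <= i.
Proof.
  intros [n Hn]. revert Hn. induction n as [n IH] using lt_wf_ind. intro Hn.
  destruct (classic (exists i, i < n /\ P i)) as [[i [Hi HPi]]|Hno].
  - exact (IH i Hi HPi).
  - exists n. split. exact Hn. intros i Hi. destruct (Nat.lt_ge_cases i n); auto.
    exfalso. apply Hno. eauto.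
Qed.

Definition F {G : RLGroup} (s g : G) (i : nat) : G :=
  mul (join g (npowN s i)) (inv (join g (npowN s (i - 1)))).

Lemma R_mul {G : RLGroup} (g f : G) : mul (mul g (inv f)) f = g.
Proof. rewrite <- mulA, mulVg, mulg1. reflexivity. Qed.

Lemma R_le {G : RLGroup} (s g : G) : strong_order_unit s -> le g e ->
  le (mul g (inv (join g (npowN s 1)))) e.
Proof.
  intros Hs Hg. rewrite <- (mulgV G (join g (npowN s 1))). apply le_rinv, join_ub1.
Qed.

Lemma R_join_mul {G : RLGroup} (s g : G) j : strong_order_unit s ->
  mul (join (mul g (inv (join g (npowN s 1)))) (npowN s j)) (join g (npowN s 1))
  = join g (npowN s (S j)).
Proof.
  intros Hs. rewrite join_mulr, R_mul.
  rewrite (sou_ljoinN s j Hs), N1, N_add.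
  apply le_antisym.
  - apply join_lub. apply join_ub1. apply join_lub.
    apply le_join_l, N_mul_le, Hs. apply join_ub2.
  - apply join_lub. apply join_ub1. apply le_join_r, join_ub2.
Qed.

Lemma R_join {G : RLGroup} (s g : G) j : strong_order_unit s ->
  join (mul g (inv (join g (npowN s 1)))) (npowN s j)
  = mul (join g (npowN s (S j))) (inv (join g (npowN s 1))).
Proof.
  intros Hs. rewrite <- (R_join_mul s g j Hs), <- mulA, mulgV, mulg1. reflexivity.
Qed.

Lemma R_min {G : RLGroup} (s g : G) i : strong_order_unit s ->
  le (npowN s i) (mul g (inv (join g (npowN s 1)))) <-> le (npowN s (S i)) g.
Proof.
  intros Hs.
  assert (E : mul (npowN s i) (join g (npowN s 1)) = join (mul (npowN s i) g) (npowN s (S i))).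
  { rewrite (sou_ljoinN s i Hs), N1, N_add. reflexivity. }
  split; intro H.
  - apply (le_rinv G _ _ (join g (npowN s 1))) in H. rewrite R_mul, E in H.
    eapply le_trans. apply join_ub2. exact H.
  - apply (le_mulr_rev _ _ (join g (npowN s 1))). rewrite R_mul, E.
    apply join_lub. apply N_mul_le, Hs. exact H.
Qed.

Lemma inv_inv {G : RLGroup} (x : G) : inv (inv x) = x.
Proof. symmetry. apply inv_uniq. apply mulVg. Qed.

Lemma R_F {G : RLGroup} (s g : G) j : strong_order_unit s -> 1 <= j ->
  F s (mul g (inv (join g (npowN s 1)))) j = F s g (S j).
Proof.
  intros Hs Hj. unfold F. rewrite !R_join by exact Hs.
  replace (S (j - 1)) with j by lia. simpl. rewrite Nat.sub_0_r.
  rewrite inv_mul, inv_inv, <- mulA, (mulA _ (inv _)), mulVg, mul1g. reflexivity.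
Qed.

Local Notation PR l := (prodR _ l).

Lemma prodR_gen {G : RLGroup} (l : list G) a :
  fold_left (fun acc x => mul x acc) l a = mul (PR l) a.
Proof.
  revert a. induction l as [|x l IH]; intro a; simpl.
  - unfold prodR. simpl. rewrite mul1g. reflexivity.
  - unfold prodR. simpl. rewrite !IH, mulg1. apply mulA.
Qed.

Lemma prodR_cons {G : RLGroup} (x : G) l : PR (x :: l) = mul (PR l) x.
Proof. unfold prodR at 1. simpl. rewrite prodR_gen, mulg1. reflexivity. Qed.

Definition II {G : RLGroup} (s x : G) := in_interval _ (inv s) e x.

Definition NoH {G : RLGroup} (s x y : G) := ~ exists h h' : G, negcone h /\ negcone h' /\ h <> e /\
         mul h' h = y /\ in_interval _ (inv s) e (mul h x).

Fixpoint Norm {G : RLGroup} (s : G) (l : list G) : Prop :=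
  match l with
  | [] => True
  | x :: l' => II s x /\ x <> e /\
      match l' with [] => True | y :: _ => NoH s x y end /\ Norm s l'
  end.

Lemma C_NoH {G : RLGroup} (s x y : G) : II s x -> II s y ->
  join (mul y x) (inv s) = x -> NoH s x y.
Proof.
  intros Hx Hy C [h [h' [Hh [Hh' [Hne [Heq Hint]]]]]]. apply Hne.
  apply le_antisym. exact Hh.
  apply (le_mulr_rev _ _ x). rewrite mul1g. rewrite <- C at 1.
  apply join_lub. 2: apply Hint.
  apply le_rinv. rewrite <- Heq. rewrite <- (mul1g G h) at 2. apply le_rinv, Hh'.
Qed.

Lemma NoH_C {G : RLGroup} (s x y : G) : II s x -> II s y -> NoH s x y ->
  join (mul y x) (inv s) = x.
Proof.
  intros Hx Hy HN.
  set (h := join y (mul (inv s) (inv x))).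
  assert (Hhx : mul h x = join (mul y x) (inv s)).
  { unfold h. rewrite join_mulr, <- mulA, mulVg, mulg1. reflexivity. }
  destruct (classic (h = e)) as [E|E].
  - rewrite <- Hhx, E, mul1g. reflexivity.
  - exfalso. apply HN. exists h, (mul y (inv h)).
    assert (Hhe : le h e).
    { apply join_lub. apply Hy. rewrite <- (mulgV G x). apply le_rinv, Hx. }
    split. exact Hhe. split.
    { unfold negcone. rewrite <- (mulgV G h). apply le_rinv, join_ub1. }
    split. exact E. split. apply R_mul.
    split. rewrite Hhx. apply join_ub2.
    eapply le_trans. 2: apply Hx. rewrite <- (mul1g G x) at 2. apply le_rinv, Hhe.
Qed.

Lemma key_head {G : RLGroup} (s : G) f l : strong_order_unit s -> Norm s (f :: l) ->
  f = join (PR (f :: l)) (inv s).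
Proof.
  intro Hs. revert f. induction l as [|f2 l IH]; intros f Hn.
  - rewrite prodR_cons. unfold prodR. simpl. rewrite mul1g.
    symmetry. apply join_le_eq. apply Hn.
  - destruct Hn as [Hf [Hne [HN Hn]]].
    pose proof (IH f2 Hn) as E2.
    assert (Hf2 : II s f2) by apply Hn.
    pose proof (NoH_C s f f2 Hf Hf2 HN) as C.
    rewrite prodR_cons.
    assert (E : mul f2 f = mul (join (PR (f2 :: l)) (inv s)) f) by (f_equal; exact E2).
    rewrite E, join_mulr in C.
    transitivity (join (join (mul (PR (f2 :: l)) f) (mul (inv s) f)) (inv s)). symmetry; exact C.
    apply le_antisym.
    + apply join_lub. apply join_lub. apply join_ub1. apply le_join_r.
      rewrite <- (mulg1 G (inv s)) at 2. apply ljoin_mono. apply ljoin_inv, sou_ljoin, Hs. apply Hf.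
      apply join_ub2.
    + apply join_lub. apply le_join_l, join_ub1. apply join_ub2.
Qed.

Lemma A_iff {G : RLGroup} (s : G) (l : list G) :
  ((forall x, In x l -> II s x) /\ (forall x, In x l -> x <> e) /\
   (forall i, S i < length l -> NoH s (nth i l e) (nth (S i) l e))) <-> Norm s l.
Proof.
  induction l as [|x l IH].
  - simpl. split; intros; auto. split; [|split]; intros; try contradiction. lia.
  - split.
    + intros [H1 [H2 H3]]. split. apply H1; left; auto. split. apply H2; left; auto.
      split.
      * destruct l as [|y l]. trivial. apply (H3 0). simpl. lia.
      * apply IH. split; [|split].
        -- intros; apply H1; right; auto.
        -- intros; apply H2; right; auto.
        -- intros i Hi. apply (H3 (S i)). simpl. lia.
    + intros [Hx [Hne [Hp Hn]]]. apply IH in Hn as [H1 [H2 H3]].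
      split; [|split].
      * intros z [<-|Hz]; auto.
      * intros z [<-|Hz]; auto.
      * intros [|i] Hi.
        -- destruct l as [|y l]. simpl in Hi. lia. exact Hp.
        -- apply H3. simpl in Hi. lia.
Qed.

Lemma rnf_iff {G : RLGroup} (s g : G) l :
  right_normal_factorization s g l <-> g = PR l /\ Norm s l.
Proof.
  rewrite <- A_iff. unfold right_normal_factorization. split.
  - intros [H1 [H2 [H3 H4]]]. auto.
  - intros [H2 [H1 [H3 H4]]]. auto.
Qed.

Lemma L_S {G : RLGroup} (s g : G) k : strong_order_unit s -> le g e ->
  map (F s g) (seq 1 (S k)) =
  join g (npowN s 1) :: map (F s (mul g (inv (join g (npowN s 1))))) (seq 1 k).
Proof.
  intros Hs Hg. simpl. f_equal.
  - unfold F. simpl. rewrite N0, (join_le_eq' _ _ Hg), inv_e, mulg1. reflexivity.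
  - rewrite <- seq_shift, map_map. apply map_ext_in. intros j Hj.
    apply in_seq in Hj. symmetry. apply R_F. exact Hs. lia.
Qed.

Lemma existence {G : RLGroup} (s : G) k : strong_order_unit s -> forall g : G,
  le g e -> le (npowN s k) g -> (forall i, le (npowN s i) g -> k <= i) ->
  g = PR (map (F s g) (seq 1 k)) /\ Norm s (map (F s g) (seq 1 k)).
Proof.
  intro Hs. induction k as [|k IH]; intros g Hg Hk Hmin.
  - simpl. split; auto. rewrite N0 in Hk. unfold prodR. simpl. apply le_antisym; auto.
  - rewrite (L_S s g k Hs Hg).
    set (f1 := join g (npowN s 1)). set (R := mul g (inv f1)).
    assert (HRe : le R e) by (apply R_le; auto).
    assert (HRk : le (npowN s k) R) by (apply R_min; auto).
    assert (HRmin : forall i, le (npowN s i) R -> k <= i).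
    { intros i Hi. apply R_min in Hi; auto. apply Hmin in Hi. lia. }
    destruct (IH R HRe HRk HRmin) as [HP HN].
    split.
    + rewrite prodR_cons, <- HP. unfold R. symmetry. apply R_mul.
    + split; [|split; [|split]]; auto.
      * split. unfold f1. rewrite N1. apply join_ub2.
        apply join_lub. exact Hg. rewrite N1. apply sinv_le, Hs.
      * intro E. unfold R in HRk. rewrite E, inv_e, mulg1 in HRk.
        apply Hmin in HRk. lia.
      * destruct k as [|k]. simpl. trivial.
        rewrite (L_S s R k Hs HRe) in HN |- *.
        apply C_NoH.
        -- split. unfold f1. rewrite N1. apply join_ub2.
           apply join_lub. exact Hg. rewrite N1. apply sinv_le, Hs.
        -- apply HN.
        -- unfold R, f1. rewrite R_join_mul by exact Hs. rewrite <- N1.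
           apply le_antisym.
           ++ apply join_lub. apply join_lub. apply join_ub1. apply le_join_r.
              apply N_anti; auto. apply join_ub2.
           ++ apply join_lub. apply le_join_l, join_ub1. apply join_ub2.
Qed.

Lemma uniqueness {G : RLGroup} (s : G) l : strong_order_unit s -> forall g k,
  le g e -> le (npowN s k) g -> (forall i, le (npowN s i) g -> k <= i) ->
  g = PR l -> Norm s l -> l = map (F s g) (seq 1 k).
Proof.
  intro Hs. induction l as [|f l IH]; intros g k Hg Hk Hmin HP HN.
  - unfold prodR in HP. simpl in HP. subst g.
    destruct k. reflexivity. exfalso. specialize (Hmin 0). rewrite N0 in Hmin.
    specialize (Hmin (le_refl _ _)). lia.
  - pose proof (key_head s f l Hs HN) as Ef. rewrite <- HP, <- N1 in Ef.
    destruct k as [|k].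
    + exfalso. rewrite N0 in Hk. assert (Hge : g = e) by (apply le_antisym; auto). rewrite Hge in Ef.
      apply (proj1 (proj2 HN)). rewrite Ef. apply join_le_eq. apply N_le_e, Hs.
    + rewrite (L_S s g k Hs Hg). rewrite <- Ef. f_equal.
      apply IH.
      * rewrite Ef. apply R_le; auto.
      * rewrite Ef. apply R_min; auto.
      * intros i Hi. rewrite Ef in Hi. apply R_min in Hi; auto. apply Hmin in Hi. lia.
      * rewrite HP, prodR_cons, <- mulA, mulgV, mulg1. reflexivity.
      * apply HN.
Qed.

Theorem mainTheorem1 (G : RLGroup) (s g : G) :
  strong_order_unit s -> negcone g ->
  exists k : nat,
    le (npowN s k) g /\
    (forall i : nat, le (npowN s i) g -> k <= i) /\
    let l := map (fun i => mul (join g (npowN s i)) (inv (join g (npowN s (i - 1)))))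
                 (seq 1 k) in
    right_normal_factorization s g l /\
    (forall l' : list G, right_normal_factorization s g l' -> l' = l).
Proof.
  intros Hs Hg.
  destruct (min_exists _ (exists_N s g Hs)) as [k [Hk Hmin]].
  exists k. split; [exact Hk|]. split; [exact Hmin|].
  change (right_normal_factorization s g (map (F s g) (seq 1 k)) /\
    (forall l' : list G, right_normal_factorization s g l' -> l' = map (F s g) (seq 1 k))).
  split.
  - apply rnf_iff. apply existence; auto.
  - intros l' Hl'. apply rnf_iff in Hl' as [HP HN]. eapply uniqueness; eauto.
Qed.
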